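(* Let $n\ge2$ and let $\mathsf r=[r_1,\dots,r_{2n-2}]$ be a tree-like factorization of $\lambda_n$, written as $r_\ell=(\!(a_{\ell-1},a_\ell)\!)$ with integers $a_0<a_1<\dots<a_{2n-2}$. Let $k\in\{1,\dots,n-1\}$. Then: (i) if $r_\ell$ occurs strictly before $r^k_1$ or strictly after $r^k_2$ in the sequence, then $a_{\ell-1}\not\equiv k$ and $a_\ell\not\equiv k\pmod n$; (ii) if $r_\ell$ occurs strictly between $r^k_1$ and $r^k_2$, then $a_{\ell-1}\not\equiv \beta_k$ and $a_\ell\not\equiv\beta_k\pmod n$; (iii) $r_\ell=(\!(a_{\ell-1},a_\ell)\!)$ occurs strictly between $r^k_1$ and $r^k_2$ if and only if the reflection $(\!(a_\ell-n,a_{\ell-1})\!)$ also occurs in $\mathsf r$ strictly between $r^k_1$ and $r^k_2$.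
   Context: The affine symmetric group $\widetilde S_n$ is the group, under composition $(vw)(k)=v(w(k))$, of bijections $w:\mathbb Z\to\mathbb Z$ with $w(i+n)=w(i)+n$ and $\sum_{i=1}^n w(i)=\binom{n+1}{2}$. For $i\not\equiv j\pmod n$, $(\!(i,j)\!)$ is the affine reflection interchanging $i+kn$ and $j+kn$ for all $k\in\mathbb Z$; $(\!(i,j)\!)=(\!(j,i)\!)=(\!(i+kn,j+kn)\!)$. Let $\lambda_n$ be the element with $\lambda_n(k)=k+n$ for $k\not\equiv0\pmod n$ and $\lambda_n(k)=k-n(n-1)$ for $k\equiv 0\pmod n$; its reflection length is $2n-2$. $\textsc{fact}(\lambda_n)$ is the set of sequences $[r_1,\dots,r_{2n-2}]$ of reflections with $r_1\cdots r_{2n-2}=\lambda_n$. Such a sequence is tree-like if one can write $r_k=(\!(a_{k-1},b_k)\!)$ with integers $a_{k-1}<b_k$ ($1\le k\le 2n-2$) and $a_k\equiv b_k\pmod n$ ($1\le k\le 2n-3$); equivalently there are integers $a_0<\dots<a_{2n-2}$ with $r_\ell=(\!(a_{\ell-1},a_\ell)\!)$. A reflection $r_\ell$ increases an integer $k$ if $r_\ell r_{\ell+1}\cdots r_{2n-2}(k)>r_{\ell+1}\cdots r_{2n-2}(k)$. For a tree-like $\mathsf r$ and $k\in\{1,\dots,n-1\}$, exactly two reflections of $\mathsf r$ increase $k$; $r^k_1$ denotes the earlier and $r^k_2$ the later of these two in the sequence. Each of them has exactly one endpoint congruent to $k$ modulo $n$, and the other endpoints of $r^k_1$ and $r^k_2$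 are congruent to each other modulo $n$; $\beta_k$ denotes this common residue class modulo $n$. *)

(* Defs.v *)
From mathcomp Require Import all_boot all_order all_algebra.
Set Implicit Arguments. Unset Strict Implicit. Unset Printing Implicit Defensive.
Import Order.TTheory GRing.Theory Num.Theory.
Local Open Scope ring_scope.

Definition congr (n : nat) (x y : int) : Prop := (x = y %[mod n%:Z])%Z.

(* The affine reflection ((i,j)) of Z (for i, j not congruent mod n):
   interchanges i + k n and j + k n for all k, fixes everything else. *)
Definition arefl (n : nat) (i j : int) (x : int) : int :=
  if ((x - i) %% n%:Z)%Z == 0 then x - i + j
  else if ((x - j) %% n%:Z)%Z == 0 then x - j + i
  else x.

Definition lam (n : nat) (x : int) : int :=
  if (x %% n%:Z)%Z == 0 then x - (n * (n - 1))%N%:Z else x + n%:Z.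

Definition flen (n : nat) : nat := (2 * n - 2)%N.

(* Given a : nat -> int, the sequence of reflections r_l = ((a_{l-1}, a_l)),
   1 <= l <= 2n-2. *)
Definition rr (n : nat) (a : nat -> int) (l : nat) : int -> int :=
  arefl n (a l.-1) (a l).

(* Partial product r_l r_{l+1} ... r_{2n-2} (composition, rightmost applied
   first); for l > 2n-2 it is the identity. *)
Definition prod_from (n : nat) (a : nat -> int) (l : nat) (x : int) : int :=
  foldr (fun j acc => rr n a j acc) x (iota l ((flen n).+1 - l)).

Definition increases (n : nat) (a : nat -> int) (l : nat) (x : int) : Prop :=
  prod_from n a (l.+1) x < prod_from n a l x.

(* Main.v *)
Require Import Defs.
From mathcomp Require Import all_boot all_order all_algebra.
From mathcomp Require Import zify.
Import Order.TTheory GRing.Theory Num.Theory.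
Local Open Scope ring_scope.

Lemma congrP n x y : congr n x y <-> exists z, x = y + z * n%:Z.
Proof.
rewrite /congr; split.
  by move/eqP; rewrite eqz_mod_dvd => /dvdzP [q hq]; exists q; lia.
by move=> [z ->]; apply/eqP; rewrite eqz_mod_dvd; apply/dvdzP; exists z; lia.
Qed.

Lemma congr_sym {n x y} : congr n x y -> congr n y x.
Proof. by rewrite /congr => ->. Qed.
Lemma congr_trans {n x y w} : congr n x y -> congr n y w -> congr n x w.
Proof. by rewrite /congr => ->. Qed.

Lemma mod0E n u v : (((u - v) %% n%:Z)%Z == 0) = (u == v %[mod n%:Z])%Z.
Proof.
rewrite eqz_mod_dvd; apply/idP/idP.
  by move/eqP/dvdz_mod0P.
by move/dvdz_mod0P/eqP.
Qed.

Lemma arefl_spec n i j x : ~ congr n i j ->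
  (congr n x i /\ arefl n i j x = x - i + j) \/
  (congr n x j /\ arefl n i j x = x - j + i) \/
  (~ congr n x i /\ ~ congr n x j /\ arefl n i j x = x).
Proof.
move=> hij; rewrite /arefl /congr.
case: ifP => h1.
  by left; split => //; apply/eqP; rewrite -mod0E.
case: ifP => h2.
  by right; left; split => //; apply/eqP; rewrite -mod0E.
right; right; split; [|split] => //.
  by move/eqP; rewrite -mod0E h1.
by move/eqP; rewrite -mod0E h2.
Qed.

Lemma arefl_shift n i j x z :
  arefl n i j (x + z * n%:Z) = arefl n i j x + z * n%:Z.
Proof.
rewrite /arefl.
have -> : x + z * n%:Z - i = z * n%:Z + (x - i) by lia.
have -> : x + z * n%:Z - j = z * n%:Z + (x - j) by lia.
rewrite !modzMDl.
by case: ifP => _; [|case: ifP => _]; lia.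
Qed.

Lemma arefl_shift2 n i j x z :
  arefl n (i + z * n%:Z) (j + z * n%:Z) x = arefl n i j x.
Proof.
rewrite /arefl.
have -> : x - (i + z * n%:Z) = (- z) * n%:Z + (x - i) by lia.
have -> : x - (j + z * n%:Z) = (- z) * n%:Z + (x - j) by lia.
rewrite !modzMDl.
by case: ifP => _; [|case: ifP => _]; lia.
Qed.

Lemma congr_addl n x i j : congr n x i -> congr n (x - i + j) j.
Proof. by move/congrP => [z ->]; apply/congrP; exists z; lia. Qed.

Lemma arefl_inj n i j u w : ~ congr n i j ->
  congr n (arefl n i j u) (arefl n i j w) -> congr n u w.
Proof.
move=> hij.
have key : forall y, (congr n y i /\ congr n (arefl n i j y) j) \/
                     (congr n y j /\ congr n (arefl n i j y) i) \/
                     (~ congr n y i /\ ~ congr n y j /\ arefl n i j y = y).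
  move=> y; case: (arefl_spec _ _ _ y hij) => [[h ->]|[[h ->]|h]].
  - by left; split => //; apply: congr_addl.
  - by right; left; split => //; apply: congr_addl.
  - by right; right.
case: (key u) => [[hu fu]|[[hu fu]|[hu1 [hu2 fu]]]];
case: (key w) => [[hw fw]|[[hw fw]|[hw1 [hw2 fw]]]] => h.
- exact: (congr_trans hu (congr_sym hw)).
- by case: hij; apply: (congr_trans (congr_sym fw)); apply: congr_sym;
     apply: (congr_trans (congr_sym fu)).
- by case: hw2; rewrite -fw; apply: congr_sym; apply: (congr_trans (congr_sym fu)).
- by case: hij; apply: (congr_trans (congr_sym fu)); apply: (congr_trans h).
- exact: (congr_trans hu (congr_sym hw)).
- by case: hw1; rewrite -fw; apply: congr_sym; apply: (congr_trans (congr_sym fu)).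
- by case: hu2; rewrite -fu; apply: (congr_trans h).
- by case: hu1; rewrite -fu; apply: (congr_trans h).
- by rewrite -fu -fw.
Qed.

Section Main.
Variables (n : nat) (a : nat -> int).
Hypothesis n2 : (2 <= n)%N.
Hypothesis ainc : forall l, (l < flen n)%N -> a l < a l.+1.
Hypothesis aval : forall l, (1 <= l <= flen n)%N -> ~ congr n (a l.-1) (a l).
Hypothesis alam : forall x, prod_from n a 1 x = lam n x.

Local Notation L := (flen n).
Definition T x t := prod_from n a t x.

Lemma T_last x : T x L.+1 = x.
Proof. by rewrite /T /prod_from subnn. Qed.

Lemma T_step x t : (t <= L)%N -> T x t = rr n a t (T x t.+1).
Proof.
move=> ht; rewrite /T /prod_from subSn // subSS /=.
Qed.

Lemma foldr_shift s x z :
  foldr (fun j acc => rr n a j acc) (x + z * n%:Z) s =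
  foldr (fun j acc => rr n a j acc) x s + z * n%:Z.
Proof. by elim: s => //= j s ->; rewrite /rr arefl_shift. Qed.

Lemma T_shift x z t : T (x + z * n%:Z) t = T x t + z * n%:Z.
Proof. exact: foldr_shift. Qed.

Lemma foldr_inj s x y : (forall j, j \in s -> (1 <= j <= L)%N) ->
  congr n (foldr (fun j acc => rr n a j acc) x s)
          (foldr (fun j acc => rr n a j acc) y s) -> congr n x y.
Proof.
elim: s => //= j s IH hs h.
apply: IH; first by move=> i hi; apply: hs; rewrite inE hi orbT.
have hj : (1 <= j <= L)%N by apply: hs; rewrite inE eqxx.
move: h; rewrite /rr => h; exact: (arefl_inj _ _ _ _ _ (aval _ hj) h).
Qed.

Lemma T_inj x y t : (1 <= t)%N -> congr n (T x t) (T y t) -> congr n x y.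
Proof.
move=> ht; apply: foldr_inj => j; rewrite mem_iota => /andP [h1 h2].
lia.
Qed.

Lemma L_ge2 : (2 <= L)%N.
Proof. rewrite /flen; lia. Qed.

Lemma n_pos : (0 < n)%N.
Proof. lia. Qed.

Lemma T_blank t : (1 <= t <= L.+1)%N -> T (a L) t = a t.-1.
Proof.
suff H : forall m, (m <= L)%N -> T (a L) (L.+1 - m) = a (L - m).
  move=> /andP [h1 h2]; have := H (L.+1 - t)%N ltac:(lia).
  have -> : (L.+1 - (L.+1 - t) = t)%N by lia.
  by have -> : (L - (L.+1 - t) = t.-1)%N by lia.
elim=> [|m IH] hm; first by rewrite subn0 T_last subn0.
have ht : (L.+1 - m.+1 <= L)%N by lia.
rewrite T_step //.
have -> : (L.+1 - m.+1).+1 = (L.+1 - m)%N by lia.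
rewrite IH; last by lia.
have -> : (L - m = L.+1 - m.+1)%N by lia.
set u := (L.+1 - m.+1)%N in ht *.
have hv : ~ congr n (a u.-1) (a u) by apply: aval; rewrite /u; lia.
rewrite /rr; case: (arefl_spec _ _ _ (a u) hv) => [[h _]|[[_ ->]|[_ [h _]]]].
- by case: hv; apply: congr_sym.
- have -> : (L - m.+1 = u.-1)%N by rewrite /u; lia.
  lia.
- by case: h.
Qed.

Lemma a_lt i j : (i < j <= L)%N -> a i < a j.
Proof.
elim: j => [|j IH] //= /andP [hij hj].
have h1 := ainc j ltac:(lia).
case: (ltngtP i j) => [h|h|h].
- by apply: lt_trans h1; apply: IH; lia.
- lia.
- by rewrite h.
Qed.

Lemma aL0 : congr n (a L) 0.
Proof.
have h := alam (a L); rewrite -/(T (a L) 1) T_blank /= in h; last by have := L_ge2; lia.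
have h0 : a 0 < a L by apply: a_lt; have := L_ge2; lia.
move: h; rewrite /lam; case: ifP => [/eqP h _|_ h]; last by lia.
by rewrite /congr h mod0z.
Qed.

Lemma lam_tok x : ~ congr n x 0 -> lam n x = x + n%:Z.
Proof.
rewrite /lam; case: ifP => // /eqP h; case.
by rewrite /congr h mod0z.
Qed.

Lemma tok_step x t : ~ congr n x 0 -> (1 <= t <= L)%N ->
 (T x t = T x t.+1 /\ ~ congr n (T x t.+1) (a t.-1) /\ ~ congr n (T x t.+1) (a t)) \/
 (congr n (T x t.+1) (a t.-1) /\ T x t = T x t.+1 + (a t - a t.-1)).
Proof.
move=> hx ht; rewrite T_step; last by lia.
rewrite /rr; case: (arefl_spec _ _ _ (T x t.+1) (aval _ ht)) => [[h ->]|[[h _]|[h1 [h2 ->]]]].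
- by right; split => //; lia.
- case: hx; apply: (congr_trans _ aL0).
  apply: (T_inj _ _ t.+1) => //.
  by rewrite T_blank /=; last by lia.
- by left.
Qed.

Lemma tok_nomove x t : ~ congr n x 0 -> (1 <= t <= L)%N -> ~ (T x t.+1 < T x t) ->
 T x t = T x t.+1 /\ ~ congr n (T x t.+1) (a t.-1) /\ ~ congr n (T x t.+1) (a t).
Proof.
move=> hx ht hm; case: (tok_step _ _ hx ht) => // [[_ h]].
have := ainc t.-1 ltac:(lia); have -> : t.-1.+1 = t by lia.
lia.
Qed.

Lemma tok_move x t : ~ congr n x 0 -> (1 <= t <= L)%N -> (T x t.+1 < T x t) ->
 congr n (T x t.+1) (a t.-1) /\ T x t = T x t.+1 + (a t - a t.-1).
Proof.
move=> hx ht hm; case: (tok_step _ _ hx ht) => // [[h _]].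
lia.
Qed.

Lemma tok_const x t1 t2 : ~ congr n x 0 -> (1 <= t1)%N -> (t1 <= t2 <= L.+1)%N ->
  (forall l, (t1 <= l < t2)%N -> ~ (T x l.+1 < T x l)) -> T x t1 = T x t2.
Proof.
move=> hx h1 /andP [h12 h2] hno.
have [d hd] : exists d, t2 = (t1 + d)%N by exists (t2 - t1)%N; lia.
subst t2.
clear h12; move: h2 hno; elim: d => [|d IH] h2 hno; first by rewrite addn0.
rewrite IH; [|lia|by move=> l hl; apply: hno; lia].
have hr : (1 <= t1 + d <= L)%N by lia.
have hr2 : (t1 <= t1 + d < t1 + d.+1)%N by lia.
have := tok_nomove _ (t1 + d)%N hx hr (hno _ hr2).
by rewrite addnS => [[->]].
Qed.

Definition tok (v : nat) : bool := (0 < v < n)%N.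
Definition mvb (v l : nat) : bool := T v%:Z l.+1 < T v%:Z l.
Definition sv v := [seq l <- index_iota 1 L.+1 | mvb v l].

Lemma tok_nz {v} : tok v -> ~ congr n v%:Z 0.
Proof.
rewrite /tok /congr => /andP [h1 h2]; rewrite mod0z modz_small; first by lia.
apply/andP; split; lia.
Qed.

Lemma tok_congr v w : tok v -> tok w -> congr n v%:Z w%:Z -> v = w.
Proof.
rewrite /tok /congr => /andP [h1 h2] /andP [h3 h4].
rewrite !modz_small; [lia| |]; apply/andP; split; lia.
Qed.

Lemma mv_uniq l v w : tok v -> tok w -> (1 <= l <= L)%N -> mvb v l -> mvb w l -> v = w.
Proof.
move=> hv hw hl m1 m2.
have [c1 _] := tok_move _ _ (tok_nz hv) hl m1.
have [c2 _] := tok_move _ _ (tok_nz hw) hl m2.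
apply: tok_congr => //; apply: (T_inj _ _ l.+1) => //.
exact: congr_trans c1 (congr_sym c2).
Qed.

Lemma T_one x : ~ congr n x 0 -> T x 1 = x + n%:Z.
Proof. by move=> hx; rewrite /T alam lam_tok. Qed.

Lemma sum_tel v : tok v -> \sum_(1 <= l < L.+1) (T v%:Z l - T v%:Z l.+1) = n%:Z.
Proof.
move=> hv.
rewrite (telescope_sumr_eq (fun k => - T v%:Z k)); last by move=> k _; lia.
  rewrite T_last T_one; last exact: tok_nz hv.
  by rewrite opprK addrA addNr add0r.
by [].
Qed.

Lemma term_eq v l : tok v -> (1 <= l <= L)%N ->
  T v%:Z l - T v%:Z l.+1 = if mvb v l then a l - a l.-1 else 0.
Proof.
move=> hv hl; case: (boolP (mvb v l)) => h.
  by have [_ ->] := tok_move _ _ (tok_nz hv) hl h; lia.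
have [-> _] := tok_nomove _ _ (tok_nz hv) hl (elimN idP h); lia.
Qed.

Lemma cnt_ge2 v : tok v -> (2 <= size (sv v))%N.
Proof.
move=> hv.
have hs : \sum_(l <- sv v) (a l - a l.-1) = n%:Z.
  rewrite /sv big_filter -(sum_tel _ hv) big_mkcond /=.
  by apply: eq_big_seq => l; rewrite mem_index_iota => hl; rewrite term_eq //; lia.
have hmem : forall l, l \in sv v -> (1 <= l <= L)%N.
  by move=> l; rewrite mem_filter mem_index_iota => /andP [_ h]; lia.
case E: (sv v) hs hmem => [|l0 [|l1 s]] //= hs hmem.
- by rewrite big_nil in hs; lia.
- rewrite big_seq1 in hs.
  have hl0 := hmem l0 (mem_head _ _).
  by case: (aval _ hl0); apply/congrP; exists (-1); lia.
Qed.

Lemma sum_bool (r : seq nat) (P : pred nat) :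
  (\sum_(i <- r) (P i : nat) = count P r)%N.
Proof. by elim: r => [|x r IH]; rewrite ?big_nil ?big_cons //= IH; case: (P x). Qed.

Lemma inner_le1 l : (1 <= l <= L)%N -> (count (fun v => mvb v l) (index_iota 1 n) <= 1)%N.
Proof.
move=> hl.
case: (boolP (has (fun v => mvb v l) (index_iota 1 n))) => [/hasP [v0 hv0 m0]|].
  rewrite (eq_in_count (a2 := pred1 v0)); last first.
    move=> w hw /=; apply/idP/eqP => [mw|->//].
    apply: (mv_uniq _ _ _ _ _ hl mw m0); rewrite /tok;
      move: hw hv0; rewrite !mem_index_iota; lia.
  by rewrite count_uniq_mem ?iota_uniq //; case: (_ \in _).
by rewrite has_count; lia.
Qed.

Lemma swap_sum : (\sum_(1 <= v < n) size (sv v) =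
   \sum_(1 <= l < L.+1) count (fun v => mvb v l) (index_iota 1 n))%N.
Proof.
have -> : (\sum_(1 <= v < n) size (sv v) =
    \sum_(1 <= v < n) \sum_(1 <= l < L.+1) (mvb v l : nat))%N.
  by apply: eq_bigr => v _; rewrite /sv size_filter sum_bool.
rewrite exchange_big /=.
by apply: eq_bigr => l _; rewrite sum_bool.
Qed.

Lemma total : (\sum_(1 <= v < n) size (sv v) <= L)%N.
Proof.
rewrite swap_sum.
apply: (@leq_trans (\sum_(1 <= l < L.+1) 1)%N).
  rewrite big_seq [X in (_ <= X)%N]big_seq; apply: leq_sum => l.
  by rewrite mem_index_iota => hl; apply: inner_le1; lia.
by rewrite sum_nat_const_nat; lia.
Qed.

Lemma sum_eq : (\sum_(1 <= v < n) size (sv v) = L)%N /\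
  forall v, tok v -> size (sv v) = 2%N.
Proof.
have hge : forall w, (1 <= w < n)%N -> (2 <= size (sv w))%N.
  by move=> w hw; apply: cnt_ge2; rewrite /tok; lia.
have h := total.
have hsplit : (\sum_(1 <= w < n) size (sv w) =
   \sum_(1 <= w < n) (size (sv w) - 2) + \sum_(1 <= w < n) 2)%N.
  rewrite -big_split /= big_seq [RHS]big_seq; apply: eq_bigr => w.
  by rewrite mem_index_iota => hw; have := hge w hw; lia.
rewrite hsplit sum_nat_const_nat in h.
have h0 : (\sum_(1 <= w < n) (size (sv w) - 2) == 0)%N by rewrite /flen in h; lia.
split.
  by rewrite hsplit (eqP h0) sum_nat_const_nat /flen; lia.
move=> v hv; move: h0; rewrite sum_nat_seq_eq0 => /allP /(_ v).
rewrite mem_index_iota; move: (hv); rewrite /tok => hv' /(_ ltac:(lia)) /=.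
by have := hge v ltac:(lia); lia.
Qed.

Lemma mover_ex l : (1 <= l <= L)%N -> exists v, tok v /\ mvb v l.
Proof.
move=> hl.
set c := fun l => count (fun v => mvb v l) (index_iota 1 n).
have heq : (\sum_(1 <= l < L.+1) c l = L)%N by rewrite -swap_sum; exact: sum_eq.1.
have hsp : (\sum_(1 <= l < L.+1) 1 = \sum_(1 <= l < L.+1) (1 - c l) + \sum_(1 <= l < L.+1) c l)%N.
  rewrite -big_split /= big_seq [RHS]big_seq; apply: eq_bigr => l'.
  by rewrite mem_index_iota => hl'; have := inner_le1 l' ltac:(lia); rewrite /c; lia.
rewrite heq sum_nat_const_nat in hsp.
have h0 : (\sum_(1 <= l < L.+1) (1 - c l) == 0)%N by lia.
move: h0; rewrite sum_nat_seq_eq0 => /allP /(_ l); rewrite mem_index_iota => /(_ ltac:(lia)) /=.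
rewrite /c subn_eq0 -has_count => /hasP [v hv mv].
by exists v; split => //; move: hv; rewrite mem_index_iota /tok; lia.
Qed.

Definition q1 v := nth 0%N (sv v) 0.
Definition q2 v := nth 0%N (sv v) 1.

Lemma q_spec v : tok v -> [/\ (1 <= q1 v)%N, (q1 v < q2 v)%N, (q2 v <= L)%N &
   forall l, (1 <= l <= L)%N -> (mvb v l <-> l = q1 v \/ l = q2 v)].
Proof.
move=> hv.
have hs : sorted ltn (sv v).
  by apply: sorted_filter; [exact: ltn_trans | exact: iota_ltn_sorted].
have hmem : forall l, l \in sv v <-> (1 <= l <= L)%N /\ mvb v l.
  move=> l; rewrite mem_filter mem_index_iota; split.
    by move=> /andP [h1 h2]; split => //; lia.
  by move=> [h1 h2]; rewrite h2 /=; lia.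
rewrite /q1 /q2; have := sum_eq.2 v hv.
case E: (sv v) hs hmem => [|x [|y [|z s]]] //= hs hmem _.
rewrite andbT in hs.
have [hx1 _] := (hmem x).1 (mem_head _ _).
have [hy1 _] := (hmem y).1 ltac:(by rewrite !inE eqxx orbT).
split => //; [lia|lia|].
move=> l hl; split.
  by move=> ml; have := (hmem l).2 (conj hl ml); rewrite !inE => /orP [/eqP|/eqP]; auto.
by move=> [->|->]; apply: (proj2 ((hmem _).1 _)); rewrite !inE eqxx ?orbT.
Qed.

Arguments q_spec {v}.

Lemma nomv v l : tok v -> (1 <= l <= L)%N -> l <> q1 v -> l <> q2 v ->
  ~ (T v%:Z l.+1 < T v%:Z l).
Proof.
move=> hv hl h1 h2 m; have [_ _ _ hiff] := q_spec hv.
by case: ((hiff l hl).1 m).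
Qed.
Arguments nomv {v l}.

Lemma mvq1 v : tok v -> mvb v (q1 v).
Proof. move=> hv; have [h1 h12 h2 hiff] := q_spec hv; apply/(hiff _ _).2; [lia|by left]. Qed.
Arguments mvq1 {v}.
Lemma mvq2 v : tok v -> mvb v (q2 v).
Proof. move=> hv; have [h1 h12 h2 hiff] := q_spec hv; apply/(hiff _ _).2; [lia|by right]. Qed.
Arguments mvq2 {v}.

Lemma traj v : tok v ->
  [/\ forall t, (q2 v < t <= L.+1)%N -> T v%:Z t = v%:Z,
      forall t, (q1 v < t <= q2 v)%N -> T v%:Z t = v%:Z + (a (q2 v) - a (q2 v).-1),
      forall t, (1 <= t <= q1 v)%N -> T v%:Z t = v%:Z + n%:Z,
      congr n (T v%:Z (q2 v).+1) (a (q2 v).-1) &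
      congr n (T v%:Z (q1 v).+1) (a (q1 v).-1) /\
      T v%:Z (q1 v) = T v%:Z (q1 v).+1 + (a (q1 v) - a (q1 v).-1)].
Proof.
move=> hv; have [h1 h12 h2 hiff] := q_spec hv.
have hx := tok_nz hv.
have F1 : forall t, (q2 v < t <= L.+1)%N -> T v%:Z t = v%:Z.
  move=> t ht; rewrite (tok_const _ t L.+1 hx) ?T_last //; try lia.
  by move=> l hl; apply: nomv => //; lia.
have [c2 e2] := tok_move _ (q2 v) hx ltac:(lia) (mvq2 hv).
rewrite F1 in c2 e2; try lia.
have F2 : forall t, (q1 v < t <= q2 v)%N -> T v%:Z t = v%:Z + (a (q2 v) - a (q2 v).-1).
  move=> t ht; rewrite (tok_const _ t (q2 v) hx) ?e2 //; try lia.
  by move=> l hl; apply: nomv => //; lia.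
have [c1 e1] := tok_move _ (q1 v) hx ltac:(lia) (mvq1 hv).
have F3 : forall t, (1 <= t <= q1 v)%N -> T v%:Z t = v%:Z + n%:Z.
  move=> t ht; rewrite -(T_one _ hx).
  have -> : T v%:Z t = T v%:Z (q1 v).
    rewrite (tok_const _ t (q1 v) hx) //; try lia.
    by move=> l hl; apply: nomv => //; lia.
  rewrite (tok_const _ 1 (q1 v) hx) //; try lia.
  by move=> l hl; apply: nomv => //; lia.
split => //.
by rewrite F1 //; lia.
Qed.
Arguments traj {v}.

Lemma traj_facts v : tok v ->
  [/\ congr n (a (q2 v).-1) v%:Z, congr n (a (q1 v)) v%:Z,
      congr n (a (q1 v).-1) (a (q2 v)) &
      exists s, a (q1 v).-1 = a (q2 v) - n%:Z + s * n%:Z /\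
                a (q1 v) = a (q2 v).-1 + s * n%:Z].
Proof.
move=> hv; have [h1 h12 h2 hiff] := q_spec hv.
have [F1 F2 F3 c2 [c1 e1]] := traj hv.
rewrite (F1 (q2 v).+1) in c2; last by lia.
rewrite (F2 (q1 v).+1) in c1; last by lia.
rewrite (F2 (q1 v).+1) in e1; last by lia.
rewrite (F3 (q1 v)) in e1; last by lia.
move/congrP: c2 => [z hz]; move/congrP: c1 => [w hw].
split.
- by apply/congrP; exists (-z); lia.
- by apply/congrP; exists (1 - w); lia.
- by apply/congrP; exists (z - w); lia.
- by exists (1 + z - w); split; lia.
Qed.
Arguments traj_facts {v}.

Lemma partner_refl v : tok v ->
  (forall x, rr n a (q1 v) x = arefl n (a (q2 v) - n%:Z) (a (q2 v).-1) x) /\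
  (forall x, rr n a (q2 v) x = arefl n (a (q1 v) - n%:Z) (a (q1 v).-1) x).
Proof.
move=> hv; have [_ _ _ [s [hs1 hs2]]] := traj_facts hv.
split => x; rewrite /rr.
  by rewrite hs1 hs2 arefl_shift2.
have -> : a (q1 v) - n%:Z = a (q2 v).-1 + (s - 1) * n%:Z by lia.
have -> : a (q1 v).-1 = a (q2 v) + (s - 1) * n%:Z by lia.
by rewrite arefl_shift2.
Qed.
Arguments partner_refl {v}.

Lemma pos_out v m : tok v -> (m <= L)%N -> congr n (a m) v%:Z -> (q1 v <= m < q2 v)%N.
Proof.
move=> hv hm hc; have [h1 h12 h2 hiff] := q_spec hv.
have [F1 F2 F3 _ _] := traj hv.
have [c21 c1 c12 _] := traj_facts hv.
have hx := tok_nz hv.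
case: (ltnP m (q1 v)) => hm1.
  case: (eqVneq m.+1 (q1 v)) => hm2.
    have hq2 : (1 <= q2 v <= L)%N by lia.
    case: (aval _ hq2); apply: (congr_trans c21); apply: congr_sym.
    apply: (congr_trans _ hc); apply: congr_sym.
    by have <- : (q1 v).-1 = m by lia.
  have hl : (1 <= m.+1 <= L)%N by lia.
  have [_ [hn _]] := tok_nomove _ _ hx hl (nomv hv hl ltac:(lia) ltac:(lia)).
  case: hn; rewrite F3 /=; last by lia.
  apply: congr_sym; apply: (congr_trans hc); apply/congrP; exists (-1); lia.
case: (ltnP m (q2 v)) => hm3; first by apply/andP.
case: (eqVneq m L) => hmL.
  case: hx; apply: (congr_trans (congr_sym hc)); rewrite hmL; exact: aL0.
have hl : (1 <= m.+1 <= L)%N by lia.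
have [_ [hn _]] := tok_nomove _ _ hx hl (nomv hv hl ltac:(lia) ltac:(lia)).
by case: hn; rewrite F1 /=; [apply: congr_sym | lia].
Qed.
Arguments pos_out {v m}.

Lemma pos_in v m : tok v -> (q1 v <= m < q2 v)%N -> ~ congr n (a m) (a (q2 v)).
Proof.
move=> hv hm; have [h1 h12 h2 hiff] := q_spec hv.
have [F1 F2 F3 _ _] := traj hv.
have [c21 c1 c12 _] := traj_facts hv.
have hx := tok_nz hv.
case: (ltnP m.+1 (q2 v)) => hm2; last first.
  have hq2 : (1 <= q2 v <= L)%N by lia.
  have -> : m = (q2 v).-1 by lia.
  exact: aval.
have hl : (1 <= m.+1 <= L)%N by lia.
have [_ [hn _]] := tok_nomove _ _ hx hl (nomv hv hl ltac:(lia) ltac:(lia)).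
move=> hc; case: hn; rewrite F2 /=; last by lia.
apply: congr_sym; apply: (congr_trans hc).
move/congrP: c21 => [z hz]; apply/congrP; exists z; lia.
Qed.
Arguments pos_in {v m}.

Definition res (x : int) : nat := absz (x %% n%:Z)%Z.

Lemma congr_res x y : congr n x y <-> res x = res y.
Proof.
rewrite /congr /res; have := modz_ge0 x (d := n%:Z); have := modz_ge0 y (d := n%:Z).
move=> hy hx; have hn : n%:Z != 0 by lia.
move: (hy hn) (hx hn) => {hy hx} hy hx.
split; [move=> ->|]; lia.
Qed.

Lemma res_lt x : (res x < n)%N.
Proof. rewrite /res; have := ltz_pmod x (d := n%:Z); lia. Qed.

Lemma res_tok v : tok v -> res v%:Z = v.
Proof.
rewrite /tok /res => /andP [h1 h2]; rewrite modz_small; first by [].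
apply/andP; split; lia.
Qed.
Arguments res_tok {v}.

Lemma res_aL : res (a L) = 0%N.
Proof. by have := (congr_res _ _).1 aL0; rewrite /res mod0z. Qed.

Definition B v := if tok v then res (a (q2 v)) else 0%N.

Lemma B0 : B 0 = 0%N.
Proof. by rewrite /B /tok. Qed.

Lemma acyc v : tok v -> B v = 0%N \/
  (tok (B v) /\ (q1 (B v) < q1 v)%N /\ (q2 v < q2 (B v))%N).
Proof.
move=> hv; case: (eqVneq (B v) 0%N) => hB; first by left.
right; have hw : tok (B v) by rewrite /tok; have := res_lt (a (q2 v)); rewrite /B hv in hB *; lia.
have [h1 h12 h2 _] := q_spec hv.
have [_ _ c12 _] := traj_facts hv.
have cw : congr n (a (q2 v)) (B v)%:Z.
  by apply/congr_res; rewrite res_tok // /B hv.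
have o1 := pos_out hw h2 cw.
have o2 := @pos_out _ (q1 v).-1 hw ltac:(lia) (congr_trans c12 cw).
split => //; lia.
Qed.
Arguments acyc {v}.

Lemma iterB v e : tok v -> (0 < e)%N -> iter e B v = 0%N \/
  (tok (iter e B v) /\ (q1 (iter e B v) < q1 v)%N /\ (q2 v < q2 (iter e B v))%N).
Proof.
move=> hv; elim: e => // e IH _.
case: e IH => [|e] IH; first exact: acyc.
rewrite iterS; case: (IH isT) => [->|[ht [h1 h2]]].
  by left; rewrite B0.
case: (acyc ht) => [->|[ht' [h1' h2']]]; first by left.
by right; split => //; lia.
Qed.
Arguments iterB {v e}.

Lemma iterB_ne v e : tok v -> (0 < e)%N -> iter e B v <> v.
Proof.
move=> hv he; case: (iterB hv he) => [->|[_ [h _]]] hc.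
  by move: hv; rewrite -hc.
by move: h; rewrite hc ltnn.
Qed.
Arguments iterB_ne {v e}.

Lemma iter0 e : iter e B 0 = 0%N.
Proof. by elim: e => //= e ->; rewrite B0. Qed.

Definition sub (Y v : nat) := exists e, iter e B v = Y.

Lemma sub_step Y j : j <> Y -> (sub Y j <-> sub Y (B j)).
Proof.
move=> hj; split.
  by move=> [[|e] he] //; exists e; rewrite -iterSr.
by move=> [e he]; exists e.+1; rewrite iterSr.
Qed.
Arguments sub_step {Y j}.

Lemma sub_not0 Y : tok Y -> ~ sub Y 0.
Proof. by move=> hY [e]; rewrite iter0 => h; move: hY; rewrite -h. Qed.
Arguments sub_not0 {Y}.

Lemma sub_notB Y : tok Y -> ~ sub Y (B Y).
Proof. by move=> hY [e]; rewrite -iterSr; apply: iterB_ne. Qed.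
Arguments sub_notB {Y}.

Lemma sub_trans Y K v : sub Y K -> sub K v -> sub Y v.
Proof. by move=> [e1 h1] [e2 h2]; exists (e1 + e2)%N; rewrite iterD h2. Qed.
Arguments sub_trans {Y K v}.

Lemma mover_pos m : (1 <= m <= L)%N -> exists j, tok j /\ mvb j m /\
  ((m = q2 j /\ res (a m.-1) = j /\ res (a m) = B j) \/
   (m = q1 j /\ res (a m.-1) = B j /\ res (a m) = j)).
Proof.
move=> hm; have [j [hj mj]] := mover_ex _ hm.
exists j; split => //; split => //.
have [_ _ _ hiff] := q_spec hj.
have [c21 c1 c12 _] := traj_facts hj.
case: ((hiff m hm).1 mj) => ->.
  right; split => //; split.
    by rewrite /B hj; apply/congr_res.
  by rewrite ((congr_res _ _).1 c1) res_tok.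
left; split => //; split.
  by rewrite ((congr_res _ _).1 c21) res_tok.
by rewrite /B hj.
Qed.
Arguments mover_pos {m}.

Lemma mv_q v m : tok v -> (1 <= m <= L)%N -> (m = q1 v \/ m = q2 v) -> mvb v m.
Proof. by move=> hv hm h; have [_ _ _ hiff] := q_spec hv; apply/(hiff m hm).2. Qed.
Arguments mv_q {v m}.

Lemma sub_char Y : tok Y -> forall d, (d <= L)%N ->
  (sub Y (res (a (L - d)%N)) <-> (q1 Y <= L - d < q2 Y)%N).
Proof.
move=> hY; have [h1 h12 h2 hiff] := q_spec hY.
elim=> [|d IH] hd.
  rewrite subn0 res_aL; split => [/(sub_not0 hY)//|]; lia.
set m := (L - d)%N.
have hm : (1 <= m <= L)%N by rewrite /m; lia.
have -> : (L - d.+1 = m.-1)%N by rewrite /m; lia.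
have IH' := IH ltac:(lia); rewrite -/m in IH'.
have [j [hj [mj hpos]]] := mover_pos hm.
case: (eqVneq j Y) => hjY.
  subst j.
  case: hpos => [[hq [-> _]]|[hq [-> _]]].
    by split => _; [lia | rewrite /sub; exists 0%N].
  split => [hs|]; [by case: (sub_notB hY hs) | lia].
have hnq : m <> q1 Y /\ m <> q2 Y.
  split => hq; apply: (negP hjY); apply/eqP; apply: (mv_uniq m j Y hj hY hm mj);
  apply: mv_q => //; auto.
have hjY' : j <> Y by apply/eqP.
case: hpos => [[hq [hr1 hr2]]|[hq [hr1 hr2]]].
  rewrite hr1; apply: (iff_trans (sub_step hjY')); rewrite -hr2.
  by apply: (iff_trans IH'); split => ?; lia.
rewrite hr1; apply: (iff_trans (iff_sym (sub_step hjY'))); rewrite -hr2.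
by apply: (iff_trans IH'); split => ?; lia.
Qed.
Arguments sub_char {Y}.

Lemma sub_char' Y m : tok Y -> (m <= L)%N ->
  (sub Y (res (a m)) <-> (q1 Y <= m < q2 Y)%N).
Proof.
move=> hY hm; have := sub_char hY (L - m)%N ltac:(lia).
by have -> : (L - (L - m) = m)%N by lia.
Qed.
Arguments sub_char' {Y m}.

Lemma laminar K Y m : tok K -> tok Y -> (q1 K <= m < q2 K)%N -> (q1 Y <= m < q2 Y)%N ->
  ((q1 K <= q1 Y)%N /\ (q2 Y <= q2 K)%N) \/ ((q1 Y <= q1 K)%N /\ (q2 K <= q2 Y)%N).
Proof.
move=> hK hY hmK hmY.
have [hK1 hK12 hK2 _] := q_spec hK.
have [hY1 hY12 hY2 _] := q_spec hY.
have [e1 he1] := (@sub_char' _ m hK ltac:(lia)).2 hmK.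
have [e2 he2] := (@sub_char' _ m hY ltac:(lia)).2 hmY.
have inc : forall K' Y', tok K' -> tok Y' -> sub Y' K' ->
    ((q1 Y' <= q1 K')%N /\ (q2 K' <= q2 Y')%N).
  move=> K' Y' hK' hY' hs.
  have [k1 k12 k2 _] := q_spec hK'.
  have t1 := (@sub_char' _ (q1 K') hY' ltac:(lia)).1
     (sub_trans hs ((@sub_char' _ (q1 K') hK' ltac:(lia)).2 ltac:(lia))).
  have t2 := (@sub_char' _ (q2 K').-1 hY' ltac:(lia)).1
     (sub_trans hs ((@sub_char' _ (q2 K').-1 hK' ltac:(lia)).2 ltac:(lia))).
  lia.
case: (leqP e1 e2) => he.
  right; apply: inc => //; exists (e2 - e1)%N.
  by rewrite -he1 -iterD subnK.
left; apply: inc => //; exists (e1 - e2)%N.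
by rewrite -he2 -iterD subnK //; lia.
Qed.

Lemma dsum v : tok v ->
  (a (q2 v) - a (q2 v).-1) + (a (q1 v) - a (q1 v).-1) = n%:Z.
Proof.
move=> hv; have [h1 h12 h2 _] := q_spec hv.
have [F1 F2 F3 _ [_ e1]] := traj hv.
rewrite (F2 (q1 v).+1) in e1; last by lia.
rewrite (F3 (q1 v)) in e1; last by lia.
lia.
Qed.
Arguments dsum {v}.

Lemma d_lt l : (1 <= l <= L)%N -> a l - a l.-1 < n%:Z.
Proof.
move=> hl; have [j [hj [mj hpos]]] := mover_pos hl.
have hs := dsum hj; have [h1 h12 h2 _] := q_spec hj.
have i1 := ainc (q1 j).-1 ltac:(lia); have i2 := ainc (q2 j).-1 ltac:(lia).
rewrite prednK in i1; last by lia.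
rewrite prednK in i2; last by lia.
by case: hpos => [[-> _]|[-> _]]; lia.
Qed.

Lemma q1_inj j k : tok j -> tok k -> q1 j = q1 k -> j = k.
Proof.
move=> hj hk he; have [h1 h12 h2 _] := q_spec hj.
apply: (mv_uniq (q1 j) j k hj hk ltac:(lia) (mvq1 hj)).
by rewrite he; apply: mvq1.
Qed.

Lemma q2_inj j k : tok j -> tok k -> q2 j = q2 k -> j = k.
Proof.
move=> hj hk he; have [h1 h12 h2 _] := q_spec hj.
apply: (mv_uniq (q2 j) j k hj hk ltac:(lia) (mvq2 hj)).
by rewrite he; apply: mvq2.
Qed.

Lemma fwd k l : tok k -> (q1 k < l < q2 k)%N ->
  exists l', (q1 k < l' < q2 k)%N /\
    forall x, rr n a l' x = arefl n (a l - n%:Z) (a l.-1) x.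
Proof.
move=> hk hl; have [k1 k12 k2 _] := q_spec hk.
have hl' : (1 <= l <= L)%N by lia.
have [j [hj [mj hpos]]] := mover_pos hl'.
have [j1 j12 j2 _] := q_spec hj.
have [pr1 pr2] := partner_refl hj.
have hjk : j <> k.
  move=> e; subst j; have [_ _ _ hiff] := q_spec hk.
  by case: ((hiff l hl').1 mj) => e; lia.
have nq1 : q1 j <> q1 k by move=> e; apply: hjk; apply: q1_inj.
have nq2 : q2 j <> q2 k by move=> e; apply: hjk; apply: q2_inj.
case: hpos => [[hq _]|[hq _]].
  have := @laminar k j l.-1 hk hj ltac:(lia) ltac:(lia).
  case=> [[e1 e2]|[e1 e2]]; last by lia.
  exists (q1 j); split; first by lia.
  by move=> x; rewrite pr1 hq.
have := @laminar k j l hk hj ltac:(lia) ltac:(lia).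
case=> [[e1 e2]|[e1 e2]]; last by lia.
exists (q2 j); split; first by lia.
by move=> x; rewrite pr2 hq.
Qed.

Lemma rr_at l : (1 <= l <= L)%N -> rr n a l (a l.-1) = a l.
Proof.
move=> hl; rewrite /rr.
case: (arefl_spec _ _ _ (a l.-1) (aval _ hl)) => [[_ ->]|[[h _]|[h _]]].
- lia.
- by case: (aval _ hl).
- by case: h.
Qed.

Lemma refl_distinct l1 l2 : (1 <= l1 <= L)%N -> (1 <= l2 <= L)%N ->
  (forall x, rr n a l1 x = rr n a l2 x) -> l1 = l2.
Proof.
move=> hl1 hl2 he.
have e := he (a l1.-1); rewrite rr_at // /rr in e.
have i1 := ainc l1.-1 ltac:(lia); rewrite prednK in i1; last by lia.
have i2 := ainc l2.-1 ltac:(lia); rewrite prednK in i2; last by lia.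
have [ca cb] : congr n (a l1.-1) (a l2.-1) /\ congr n (a l1) (a l2).
  case: (arefl_spec _ _ _ (a l1.-1) (aval _ hl2)) => [[h h']|[[h h']|[_ [_ h']]]].
  - split => //; rewrite e h'; apply: congr_addl => //.
  - lia.
  - lia.
have [j [hj [mj hpos]]] := mover_pos hl2.
have [j1 j12 j2 _] := q_spec hj.
have [c21 c1 c12 _] := traj_facts hj.
case: hpos => [[hq _]|[hq _]].
  have o := @pos_out j l1.-1 hj ltac:(lia) (congr_trans ca (eq_ind_r (fun t => congr n (a t.-1) j) c21 hq)).
  case: (ltnP l1 l2) => h; last by lia.
  have := @pos_in j l1 hj ltac:(lia); rewrite -hq; by case.
have o := @pos_out j l1 hj ltac:(lia) (congr_trans cb (eq_ind_r (fun t => congr n (a t) j) c1 hq)).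
case: (ltnP l2 l1) => h; last by lia.
have := @pos_in j l1.-1 hj ltac:(lia); case.
by apply: (congr_trans ca); rewrite hq.
Qed.

Lemma main_res k p1 p2 beta : (1 <= k <= n - 1)%N -> (p1 < p2)%N ->
  (forall l, (1 <= l <= flen n)%N ->
     (increases n a l k%:Z <-> l = p1 \/ l = p2)) ->
  ((congr n (a p1.-1) k%:Z /\ congr n (a p1) beta) \/
   (congr n (a p1) k%:Z /\ congr n (a p1.-1) beta)) ->
  (forall l, (1 <= l <= flen n)%N -> (l < p1)%N \/ (p2 < l)%N ->
     ~ congr n (a l.-1) k%:Z /\ ~ congr n (a l) k%:Z) /\
  (forall l, (p1 < l < p2)%N ->
     ~ congr n (a l.-1) beta /\ ~ congr n (a l) beta) /\
  (forall l, (1 <= l <= flen n)%N ->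
     ((p1 < l < p2)%N <->
      exists l', (p1 < l' < p2)%N /\
        forall x : int, rr n a l' x = arefl n (a l - n%:Z) (a l.-1) x)).
Proof.
move=> hkr hp hinc hb.
have hk : tok k by rewrite /tok; lia.
have [k1 k12 k2 hiffk] := q_spec hk.
have A := (hinc (q1 k) ltac:(lia)).1 (mvq1 hk).
have B' := (hinc (q2 k) ltac:(lia)).1 (mvq2 hk).
have hp1 : q1 k = p1 by lia.
have hp2 : q2 k = p2 by lia.
subst p1 p2.
have [c21 c1 c12 _] := traj_facts hk.
have hbeta : congr n beta (a (q2 k)).
  case: hb => [[h1 h2]|[h1 h2]].
    have hq2 : (1 <= q2 k <= L)%N by lia.
    case: (aval _ hq2); apply: (congr_trans c21).
    exact: (congr_trans (congr_sym h1) c12).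
  exact: (congr_trans (congr_sym h2) c12).
split; [|split].
- move=> l hl hout; split => hc.
    by have := @pos_out k l.-1 hk ltac:(lia) hc; lia.
  by have := @pos_out k l hk ltac:(lia) hc; lia.
- move=> l hl; split => hc.
    by apply: (@pos_in k l.-1 hk ltac:(lia)); exact: (congr_trans hc hbeta).
  by apply: (@pos_in k l hk ltac:(lia)); exact: (congr_trans hc hbeta).
move=> l hl; split; first exact: (fwd _ _ hk).
move=> [l' [hl' H]].
have [l'' [hl'' H'']] := fwd _ _ hk hl'.
have hl'r : (1 <= l' <= L)%N by lia.
have e := H (a l'.-1); rewrite rr_at // in e.
have hv : ~ congr n (a l - n%:Z) (a l.-1).
  move=> /congrP [z hz]; case: (aval _ hl); apply/congrP; exists (-1 - z); lia.
have dl := d_lt _ hl.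
have i' := ainc l'.-1 ltac:(lia); rewrite prednK in i'; last by lia.
case: (arefl_spec _ _ _ (a l'.-1) hv) => [[h h']|[[h h']|[_ [_ h']]]]; last 1 first.
- lia.
- move/congrP: h => [s hs].
  have E : forall x, rr n a l'' x = rr n a l x.
    move=> x; rewrite H'' /rr.
    have -> : a l' - n%:Z = a l.-1 + (s - 1) * n%:Z by lia.
    have -> : a l'.-1 = a l + (s - 1) * n%:Z by lia.
    by rewrite arefl_shift2.
  have := refl_distinct l'' l ltac:(lia) hl E; lia.
- lia.
Qed.

End Main.

Theorem corollary3p11 (n : nat) (a : nat -> int) (k : nat) (p1 p2 : nat)
    (beta : int) :
  (2 <= n)%N ->
  (* a_0 < a_1 < ... < a_{2n-2} *)
  (forall l, (l < flen n)%N -> a l < a l.+1) ->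
  (* each r_l = ((a_{l-1}, a_l)) is an affine reflection *)
  (forall l, (1 <= l <= flen n)%N -> ~ congr n (a l.-1) (a l)) ->
  (* r_1 ... r_{2n-2} = lambda_n *)
  (forall x : int, prod_from n a 1 x = lam n x) ->
  (1 <= k <= n - 1)%N ->
  (* r^k_1 = r_{p1}, r^k_2 = r_{p2}: the two reflections increasing k *)
  (p1 < p2)%N ->
  (forall l, (1 <= l <= flen n)%N ->
     (increases n a l k%:Z <-> l = p1 \/ l = p2)) ->
  (* beta is (a representative of) beta_k: the endpoint of r^k_1 other than
     the one congruent to k *)
  ((congr n (a p1.-1) k%:Z /\ congr n (a p1) beta) \/
   (congr n (a p1) k%:Z /\ congr n (a p1.-1) beta)) ->
  (* (i) *)
  (forall l, (1 <= l <= flen n)%N -> (l < p1)%N \/ (p2 < l)%N ->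
     ~ congr n (a l.-1) k%:Z /\ ~ congr n (a l) k%:Z) /\
  (* (ii) *)
  (forall l, (p1 < l < p2)%N ->
     ~ congr n (a l.-1) beta /\ ~ congr n (a l) beta) /\
  (* (iii) *)
  (forall l, (1 <= l <= flen n)%N ->
     ((p1 < l < p2)%N <->
      exists l', (p1 < l' < p2)%N /\
        forall x : int, rr n a l' x = arefl n (a l - n%:Z) (a l.-1) x)).
Proof.
move=> H1 H2 H3 H4 H5 H6 H7 H8.
exact: (@main_res n a H1 H2 H3 H4 k p1 p2 beta H5 H6 H7 H8).
Qed.
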